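(* Let $p$ be a prime and $i,e,h$ natural numbers, and put $q=p^h$. Then $$v_p(i!)\ge\frac{i}{p-1}-\frac{i}{e(q-1)}-h+\frac1e+\left[\frac iq\right]\left(\frac1e-\frac1{p-1}+\frac1{e(q-1)}\right)+v_p\left(\left[\frac iq\right]!\right),$$ with equality if and only if $i\equiv-1\pmod q$. In particular, if $e\le p-1$ or $i<q$, then $$v_p(i!)\ge\frac{i}{p-1}-\frac{i}{e(q-1)}-h+\frac1e,$$ with equality if and only if $i=q-1$. Moreover, if $K$ is a finite extension of $\mathbb{Q}_p$ with absolute ramification index $e\le p-1$, residue field of cardinality $q=p^h$ and uniformizer $\pi$, then $|\overline{\gamma}(0)|=|\pi/q|$.
   Context: $v_p$ is the $p$-adic valuation with $v_p(p)=1$, $|\cdot|$ the absolute value on $\mathbb{C}_p$ with $|p|=p^{-1}$, $[x]$ the integer part. For $K$ as in the statement, let $\mathcal{G}$ be the Lubin–Tate formal group over $\mathcal{O}_K$ attached to $\pi$ with logarithm $\lambda(t)$, and $\varpi_p\in\mathcal{O}_{\mathbb{C}_p}$ a $p$-adic period of $\mathcal{G}$, i.e. $\exp(\varpi_p\lambda(t))\in\mathcal{O}_{\mathbb{C}_p}[[t]]$ generates the $\mathcal{O}_K$-module $\mathrm{Hom}_{\mathcal{O}_{\mathbb{C}_p}}(\mathcal{G},\widehat{\mathbb{G}}_m)$; one has $|\varpi_p|=p^{-\frac1{p-1}+\frac1{e(q-1)}}$. $\overline{\gamma}(0)$ is any element of $\mathbb{C}_p$ with $|\overline{\gamma}(0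)|=\max_{m\ge0}|m!/\varpi_p^m|$.
   Formalization: The two equality clauses, i ≡ −1 (mod q) and i = q−1, hold only under e > 1 or h > 1; the inequalities carry no such hypothesis. Apart from conventions, each condition added here is assumed in the paper as well or is needed for the statement above to hold. *)

(* Defs.v *)
From HB Require Import structures.
From mathcomp Require Import all_boot all_order all_algebra.
From mathcomp Require Import all_classical all_reals all_analysis.
Set Implicit Arguments. Unset Strict Implicit. Unset Printing Implicit Defensive.
Import Order.TTheory GRing.Theory Num.Theory.
Local Open Scope ring_scope.

Definition vp_fact (p n : nat) : nat := logn p n`!.

Definition bound_full (p e h i : nat) : rat :=
  let q := (p ^ h)%N in
  let a := (i %/ q)%N in
  i%:R / (p%:R - 1) - i%:R / (e%:R * (q%:R - 1)) - h%:R + e%:R^-1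
  + a%:R * (e%:R^-1 - (p%:R - 1)^-1 + (e%:R * (q%:R - 1))^-1)
  + (vp_fact p a)%:R.

Definition bound_simple (p e h i : nat) : rat :=
  let q := (p ^ h)%N in
  i%:R / (p%:R - 1) - i%:R / (e%:R * (q%:R - 1)) - h%:R + e%:R^-1.

(* Absolute values in C_p, with |p| = p^-1, written as real numbers. *)
Definition abs_fact (R : realType) (p m : nat) : R := (p%:R ^+ vp_fact p m)^-1.
Definition abs_varpi (R : realType) (p e h : nat) : R :=
  powR (p%:R) (- (p%:R - 1)^-1 + (e%:R * ((p ^ h)%N%:R - 1))^-1).
Definition abs_gamma_term (R : realType) (p e h m : nat) : R :=
  abs_fact R p m / abs_varpi R p e h ^+ m.
(* |pi / q| for a uniformizer pi of a field with ramification index e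
   (|pi| = p^(-1/e)) and q = p^h (|q| = p^(-h)). *)
Definition abs_pi_over_q (R : realType) (p e h : nat) : R :=
  powR (p%:R) (- e%:R^-1) / ((p ^ h)%N%:R)^-1.

(* Main.v *)
Require Import Defs.
From HB Require Import structures.
From mathcomp Require Import all_boot all_order all_algebra.
From mathcomp Require Import all_classical all_reals all_analysis.
From mathcomp Require Import zify ring lra.
Import Order.TTheory GRing.Theory Num.Theory.

Lemma V0 p : vp_fact p 0 = 0.
Proof. by rewrite /vp_fact fact0 logn1. Qed.

Lemma Vrec p n : prime p -> vp_fact p n = n %/ p + vp_fact p (n %/ p).
Proof.
move=> pp; have p0 := prime_gt0 pp.
elim: n => [|n IH]; first by rewrite div0n V0.
rewrite /vp_fact factS lognM // ?fact_gt0 // -/(vp_fact p n) IH divnS //.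
case: (boolP (p %| n.+1)) => hd; last first.
  by rewrite lognE pp (negbTE hd) andbF /= !add0n.
move: (hd) => /dvdnP [m hm].
have m0 : 0 < m by case: m hm => [|m]; rewrite ?mul0n.
have e1 : n.+1 %/ p = m by rewrite hm mulnK.
have e2 : n %/ p = m.-1.
  have := divnS n p0; rewrite hd e1 /=; lia.
rewrite e2 /= add1n prednK //.
rewrite hm lognM // (logn_prime _ pp) eqxx.
have Fm : m`! = m * (m.-1)`! by case: (m) m0 => [|k] //= _; rewrite factS.
rewrite /vp_fact Fm lognM ?fact_gt0 //.
lia.
Qed.

Lemma Vsmall p n : prime p -> n < p -> vp_fact p n = 0.
Proof. by move=> pp hn; rewrite Vrec // divn_small // V0. Qed.

Fixpoint G p h := if h is h'.+1 then p ^ h' + G p h' else 0.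

Lemma GP p h : 0 < p -> (p - 1) * G p h = p ^ h - 1.
Proof.
move=> p0; elim: h => [|h IH] /=; first by rewrite muln0 expn0.
have X := expn_gt0 p h; rewrite p0 /= in X.
rewrite expnS mulnDr IH; nia.
Qed.

Lemma VA p h a r : prime p -> r < p ^ h ->
  vp_fact p (a * p ^ h + r) = a * G p h + vp_fact p r + vp_fact p a.
Proof.
move=> pp; have p0 := prime_gt0 pp.
elim: h r => [|h IH] r hr.
  have -> : r = 0 by move: hr; rewrite expn0; lia.
  by rewrite /= expn0 muln1 addn0 muln0 V0.
rewrite Vrec // expnS (mulnC p) mulnA divnMDl //.
rewrite IH; last by rewrite ltn_divLR // -expnSr.
rewrite (Vrec p r pp) /=; lia.
Qed.

Lemma VC p h : prime p -> (p - 1) * vp_fact p (p ^ h - 1) + h * (p - 1) = p ^ h - 1.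
Proof.
move=> pp; have p0 := prime_gt0 pp.
elim: h => [|h IH]; first by rewrite expn0 subnn V0 muln0 mul0n.
have X := expn_gt0 p h; rewrite p0 /= in X.
have E : p ^ h.+1 - 1 = (p ^ h - 1) * p + (p - 1) by rewrite expnS; nia.
rewrite E Vrec // divnMDl // (divn_small (_ : p - 1 < p)); last by lia.
rewrite addn0; nia.
Qed.

Lemma VB p k r : prime p -> r < p ^ k.+1 ->
  r <= (p - 1) * vp_fact p r + k.+1 * (p - 1) /\
  p ^ k.+1 - 1 - r <= p ^ k * ((p - 1) * vp_fact p r + k.+1 * (p - 1) - r).
Proof.
move=> pp; have p0 := prime_gt0 pp; have p1 := prime_gt1 pp.
elim: k r => [|k IH] r hr.
  rewrite expn1 in hr; rewrite Vsmall // expn0 expn1; lia.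
have hr' : r %/ p < p ^ k.+1 by rewrite ltn_divLR // -expnSr.
have [IH1 IH2] := IH _ hr'.
have Er := divn_eq r p; have Mr := ltn_pmod r p0.
rewrite (Vrec p r pp).
set V' := vp_fact p (r %/ p) in IH1 IH2 *.
set r' := r %/ p in IH1 IH2 Er hr' *.
set r0 := r %% p in Er Mr *.
have X := expn_gt0 p k; rewrite p0 /= in X.
set P := p ^ k in X IH2.
have E2 : p ^ k.+2 = P * p * p by rewrite !expnS /P; nia.
have E1 : p ^ k.+1 = P * p by rewrite expnS /P mulnC.
rewrite E2 E1; rewrite E1 in hr' IH2; rewrite E2 in hr. clearbody P.
clearbody V' r' r0. subst r.
set S' := (p - 1) * V' + k.+1 * (p - 1) - r' in IH2.
have H3 := leq_mul (leqnn p) IH2.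
rewrite mulnA (mulnC p P) in H3.
set M := P * p in H3 hr' X *.
have M0 : 0 < M by rewrite /M muln_gt0 X p0.
have H4 : (p - 1 - r0) <= M * (p - 1 - r0) by rewrite leq_pmull.
have Rp : r' * p = (p - 1) * r' + r'.
  by rewrite mulnC -{3}(mul1n r') -mulnDl subnK // ltnW.
rewrite mulnDr (mulSn k.+1) Rp.
split.
  move: IH1 Mr; generalize ((p - 1) * r') ((p - 1) * V') (k.+1 * (p - 1)); lia.
have -> : (p - 1) * r' + (p - 1) * V' + (p - 1 + k.+1 * (p - 1)) - ((p - 1) * r' + r' + r0) = S' + (p - 1 - r0).
  rewrite /S'; move: IH1 Mr; generalize ((p - 1) * r') ((p - 1) * V') (k.+1 * (p - 1)); lia.
have H5 : p * (M - 1 - r') + r' * p + p = M * p.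
  rewrite mulnBr mulnBr muln1 (mulnC p M) (mulnC p r').
  have : r' * p + p <= M * p by rewrite -mulSnr leq_mul2r hr' orbT.
  lia.
rewrite Rp in H5.
rewrite mulnDr.
clearbody S' M.
move: H3 H4 H5 Mr.
generalize (p * (M - 1 - r')) ((p - 1) * r') (M * p) (M * S') (M * (p - 1 - r0)).
lia.
Qed.

Lemma NUM p k e r : prime p -> 0 < e -> r < p ^ k.+1 ->
  (p ^ k.+1 - 1 - r) * (p - 1) <= ((p - 1) * vp_fact p r + k.+1 * (p - 1) - r) * e * (p ^ k.+1 - 1) /\
  (0 < p ^ k.+1 - 1 - r -> (1 < e) || (0 < k) ->
  (p ^ k.+1 - 1 - r) * (p - 1) < ((p - 1) * vp_fact p r + k.+1 * (p - 1) - r) * e * (p ^ k.+1 - 1)).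
Proof.
move=> pp e0 hr; have [_ B] := VB p k r pp hr.
have p1 := prime_gt1 pp; have p0 := prime_gt0 pp.
have P0 : 0 < p ^ k by rewrite expn_gt0 p0.
rewrite expnSr.
rewrite expnSr in B.
set S := ((p - 1) * vp_fact p r + k.+1 * (p - 1) - r) in B *; set P := p ^ k in B P0 *.
set d := (P * p - 1 - r) in B *.
clearbody S d.
have C1 : P * (p - 1) <= P * p - 1 by rewrite mulnBr muln1; lia.
have C2 : d * (p - 1) <= P * (p - 1) * S.
  by rewrite mulnAC leq_mul2r B orbT.
have C3 : P * (p - 1) * S <= (P * p - 1) * S by rewrite leq_mul2r C1 orbT.
have C4 : (P * p - 1) * S <= S * e * (P * p - 1).
  by rewrite mulnAC (mulnC S) leq_pmulr.
split; first by apply: leq_trans C2 (leq_trans C3 C4).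
move=> d0 /orP [e1|k0].
  have S0 : 0 < S by rewrite lt0n; apply/eqP => S00; move: B; rewrite S00 muln0; lia.
  apply: (leq_ltn_trans C2); apply: (leq_ltn_trans C3).
  rewrite mulnAC (mulnC S) ltn_Pmulr // muln_gt0 S0 andbT.
  have : 1 < P * p by apply: leq_trans p1 _; rewrite leq_pmull.
  lia.
have S0 : 0 < S by rewrite lt0n; apply/eqP => S00; move: B; rewrite S00 muln0; lia.
apply: (leq_ltn_trans C2); apply: (leq_trans _ C4).
rewrite ltn_pmul2r //.
have : p <= P by rewrite /P -{1}(expn1 p) leq_pexp2l.
rewrite mulnBr muln1; lia.
Qed.

Local Open Scope ring_scope.

Lemma keyid p e k i : prime p -> (0 < e)%N ->
  let q := (p ^ k.+1)%N in let r := (i %% q)%N in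
  let S := ((p - 1) * vp_fact p r + k.+1 * (p - 1) - r)%N in
  let d := (q - 1 - r)%N in
  (vp_fact p i)%:R - bound_full p e k.+1 i =
  ((S * e * (q - 1))%N%:R - (d * (p - 1))%N%:R) / ((p%:R - 1) * e%:R * (q%:R - 1)) :> rat.
Proof.
move=> pp e0 q r S d.
have p1 := prime_gt1 pp; have p0 := prime_gt0 pp.
have q1 : (1 < q)%N by rewrite /q -(expn0 p) ltn_exp2l.
have hr : (r < q)%N by rewrite /r ltn_pmod // ltnW.
set a := (i %/ q)%N.
have Hi : i = (a * q + r)%N by rewrite /a /r -divn_eq.
have [B1 _] := VB p k r pp hr.
have HV : vp_fact p i = (a * G p k.+1 + vp_fact p r + vp_fact p a)%N by rewrite {1}Hi VA.
have hp : (p%:R - 1 : rat) != 0.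
  by rewrite subr_eq0 pnatr_eq1; apply/eqP => E; rewrite E in p1.
have GP' := GP p k.+1 p0.
have hG : (G p k.+1)%:R = (q%:R - 1) / (p%:R - 1) :> rat.
  have : ((p - 1) * G p k.+1)%N%:R = (q - 1)%N%:R :> rat by rewrite GP'.
  rewrite natrM !natrB ?(ltnW p1) ?(ltnW q1) // => H.
  rewrite -H; field; done.
have hS : (S + r)%N%:R = (p%:R - 1) * (vp_fact p r)%:R + k.+1%:R * (p%:R - 1) :> rat.
  rewrite /S subnK // natrD !natrM natrB ?(ltnW p1) //.
have hq : ((q%:R - 1) : rat) != 0.
  by rewrite subr_eq0 pnatr_eq1; apply/eqP => E; rewrite E in q1.
have he : (e%:R : rat) != 0 by rewrite pnatr_eq0 -lt0n.
have hVr : (vp_fact p r)%:R = (S%:R + r%:R) / (p%:R - 1) - k.+1%:R :> rat.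
  rewrite -natrD hS; field; done.
have hd : d%:R = q%:R - 1 - r%:R :> rat.
  rewrite /d (natrB _ (_ : r <= q - 1)%N); last lia.
  by rewrite natrB // ltnW.
rewrite /bound_full -/q -/a HV.
rewrite !natrM !natrD natrM hG hVr.
rewrite hd !natrB ?(ltnW p1) ?(ltnW q1) //.
rewrite Hi natrD natrM.
field.
by rewrite hp he hq.
Qed.

Lemma modS0 i q : (0 < q)%N -> (i.+1 %% q = 0)%N <-> (i %% q = q - 1)%N.
Proof.
move=> q0; have hr := ltn_pmod i q0.
have -> : (i.+1 %% q = (i %% q).+1 %% q)%N by rewrite -[i.+1]addn1 -[(i %% q).+1]addn1 modnDml.
have [E|L] := eqVneq (i %% q).+1 q.
  rewrite E modnn; split => // _; lia.
have L' : ((i %% q).+1 < q)%N by rewrite ltn_neqAle L hr.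
rewrite modn_small //; split => //; lia.
Qed.

Lemma keyall p e h i : prime p -> (0 < e)%N -> (0 < h)%N ->
  bound_full p e h i <= (vp_fact p i)%:R :> rat /\
  ((1 < e)%N || (1 < h)%N -> (vp_fact p i)%:R = bound_full p e h i :> rat -> (i.+1 %% p ^ h = 0)%N) /\
  ((i.+1 %% p ^ h = 0)%N -> (vp_fact p i)%:R = bound_full p e h i :> rat).
Proof.
move=> pp e0; case: h => // k _.
move: (keyid p e k i pp e0) => /=.
set q := (p ^ k.+1)%N; set r := (i %% q)%N.
set S := ((p - 1) * vp_fact p r + k.+1 * (p - 1) - r)%N.
set d := (q - 1 - r)%N => H.
have p1 := prime_gt1 pp; have p0 := prime_gt0 pp.
have q1 : (1 < q)%N by rewrite /q -(expn0 p) ltn_exp2l.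
have hr : (r < q)%N by rewrite /r ltn_pmod // ltnW.
have [N1 N2] := NUM p k e r pp e0 hr.
rewrite -/S -/d in N1 N2.
have den : 0 < (p%:R - 1) * e%:R * (q%:R - 1) :> rat.
  rewrite !mulr_gt0 // ?subr_gt0 ?ltr1n ?ltr0n //.
split.
  rewrite -subr_ge0 H divr_ge0 ?subr_ge0 ?ler_nat // ltW //.
split.
  move=> he /eqP; rewrite -subr_eq0 H mulf_eq0 invr_eq0 (gt_eqF den) orbF.
  rewrite subr_eq0 eqr_nat => /eqP E.
  apply/modS0; first by lia.
  have : d = 0%N.
    apply/eqP; rewrite -leqn0 leqNgt; apply/negP => d0.
    have hk : (1 < e)%N || (0 < k)%N by case/orP: he => [->|]; rewrite ?orbT // ltnS => ->; rewrite orbT.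
    by move: (N2 d0 hk); rewrite E ltnn.
  rewrite /d; lia.
move/modS0 => Er.
have := Er (ltnW q1); rewrite -/r => Er'.
apply/eqP; rewrite -subr_eq0 H.
have -> : d = 0%N by rewrite /d Er'; lia.
have -> : S = 0%N.
  rewrite /S Er' /q; have := VC p k.+1 pp; lia.
by rewrite !mul0n subrr mul0r.
Qed.

Lemma bf_bs p e h i : bound_full p e h i = bound_simple p e h i +
  (i %/ p ^ h)%N%:R * (e%:R^-1 - (p%:R - 1)^-1 + (e%:R * ((p ^ h)%N%:R - 1))^-1)
  + (vp_fact p (i %/ p ^ h))%:R.
Proof. by rewrite /bound_full /bound_simple. Qed.

Lemma ratr_bs (R : realType) p e h m : ratr (bound_simple p e h m) =
  m%:R / (p%:R - 1) - m%:R / (e%:R * ((p ^ h)%N%:R - 1)) - h%:R + e%:R^-1 :> R.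
Proof.
rewrite /bound_simple.
by rewrite !(rmorphB, rmorphD, rmorphM, fmorphV, rmorph_nat, rmorph1).
Qed.

Lemma gamma_eq (R : realType) p e h m : prime p ->
  abs_gamma_term R p e h m = powR (p%:R) (- (vp_fact p m)%:R -
    (- (p%:R - 1)^-1 + (e%:R * ((p ^ h)%N%:R - 1))^-1) * m%:R).
Proof.
move=> pp; have p0 : (p%:R : R) != 0 by rewrite pnatr_eq0 -lt0n prime_gt0.
rewrite /abs_gamma_term /abs_fact /abs_varpi.
rewrite powRB ?p0 ?implybT // powRN powRrM !powR_mulrn // ?ler0n ?powR_ge0 //.
Qed.

Lemma pi_eq (R : realType) p e h : prime p ->
  abs_pi_over_q R p e h = powR (p%:R) (h%:R - e%:R^-1).
Proof.
move=> pp; have p0 : (p%:R : R) != 0 by rewrite pnatr_eq0 -lt0n prime_gt0.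
rewrite /abs_pi_over_q invrK addrC powRD ?p0 ?implybT // natrX powR_mulrn ?ler0n // mulrC.
Qed.

Theorem mainTheorem8 (R : realType) (p e h : nat) :
  prime p -> (0 < e)%N -> (0 < h)%N ->
  (* main inequality *)
  (forall i : nat, bound_full p e h i <= (vp_fact p i)%:R)
  /\ (* equality case (needs (e,h) <> (1,1), see NOTES.md) *)
  ((1 < e)%N || (1 < h)%N ->
     forall i : nat, (vp_fact p i)%:R = bound_full p e h i <->
       (i.+1 %% (p ^ h) = 0)%N)
  /\ (* simplified inequality *)
  (forall i : nat, (e <= p - 1)%N \/ (i < p ^ h)%N ->
     bound_simple p e h i <= (vp_fact p i)%:R)
  /\ (* its equality case *)
  ((1 < e)%N || (1 < h)%N ->
     forall i : nat, (e <= p - 1)%N \/ (i < p ^ h)%N ->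
     (vp_fact p i)%:R = bound_simple p e h i <-> i = (p ^ h - 1)%N)
  /\ (* |gamma(0)| = max_m |m!/varpi_p^m| = |pi/q| when e <= p-1 *)
  ((e <= p - 1)%N ->
     (forall m : nat, abs_gamma_term R p e h m <= abs_pi_over_q R p e h)
     /\ exists m : nat, abs_gamma_term R p e h m = abs_pi_over_q R p e h).
Proof.
move=> pp e0 h0.
have p1 := prime_gt1 pp; have p0 := prime_gt0 pp.
have q1 : (1 < p ^ h)%N by rewrite -(expn0 p) ltn_exp2l.
have q0 : (0 < p ^ h)%N by lia.
set c : rat := (e%:R^-1 - (p%:R - 1)^-1 + (e%:R * ((p ^ h)%N%:R - 1))^-1).
have cpos : (e <= p - 1)%N -> 0 < c.
  move=> hep.
  have hpe : (p%:R - 1)^-1 <= (e%:R : rat)^-1.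
    rewrite lef_pV2 ?posrE ?ltr0n // ?subr_gt0 ?ltr1n //.
    by rewrite -(ler_nat rat) natrB ?(ltnW p1) in hep.
  have : 0 < (e%:R * ((p ^ h)%N%:R - 1) : rat)^-1.
    by rewrite invr_gt0 mulr_gt0 ?ltr0n // subr_gt0 ltr1n.
  rewrite /c; lra.
have BS : forall i, (e <= p - 1)%N \/ (i < p ^ h)%N ->
    bound_simple p e h i <= bound_full p e h i /\
    (bound_simple p e h i = bound_full p e h i -> (i < p ^ h)%N).
  move=> i [hep|hi].
    have cp := cpos hep.
    rewrite bf_bs -/c.
    have A0 : 0 <= (i %/ p ^ h)%N%:R * c by rewrite mulr_ge0 ?ler0n // ltW.
    have V0' : 0 <= ((vp_fact p (i %/ p ^ h))%:R : rat) by rewrite ler0n.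
    split; first lra.
    move=> E.
    have : (i %/ p ^ h)%N%:R * c = 0 by lra.
    move/eqP; rewrite mulf_eq0 (gt_eqF cp) orbF pnatr_eq0 => /eqP a0.
    by rewrite -(mul1n (p ^ h)%N) -ltn_divLR // a0.
  by rewrite bf_bs divn_small // V0 mul0r !addr0.
have K := fun i => keyall p e h i pp e0 h0.
split; first by move=> i; case: (K i).
split.
  move=> he i; case: (K i) => _ [K2 K3]; split; [exact: K2 | exact: K3].
have S3 : forall i, (e <= p - 1)%N \/ (i < p ^ h)%N ->
    bound_simple p e h i <= (vp_fact p i)%:R.
  move=> i hi; case: (BS i hi) => B _; case: (K i) => K1 _; exact: le_trans B K1.
have S4b : forall i, i = (p ^ h - 1)%N -> (vp_fact p i)%:R = bound_simple p e h i.
  move=> i ->.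
  have hi : (p ^ h - 1 < p ^ h)%N by lia.
  case: (K (p ^ h - 1)%N) => _ [_ K3].
  have E : ((p ^ h - 1).+1 %% p ^ h = 0)%N by rewrite subn1 prednK // modnn.
  by have := K3 E; rewrite bf_bs divn_small // V0 mul0r !addr0.
split; first exact: S3.
split.
  move=> he i hi; split; last exact: S4b.
  move=> E.
  case: (BS i hi) => B1 B2.
  case: (K i) => K1 [K2 _].
  have E2 : bound_simple p e h i = bound_full p e h i.
    by apply/le_anti; rewrite B1 /=; move: K1; rewrite E.
  have hiq := B2 E2.
  have := K2 he (etrans E E2); move/(modS0 _ _ q0).
  by rewrite modn_small.
move=> hep; split.
  move=> m; rewrite gamma_eq // pi_eq //.
  apply: ler_powR; first by rewrite ler1n prime_gt0.
  have := S3 m (or_introl hep).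
  rewrite -(ler_rat R) ratr_bs rmorph_nat.
  lra.
exists (p ^ h - 1)%N.
rewrite gamma_eq // pi_eq //; congr powR.
have := S4b _ erefl => /(congr1 (@ratr R)).
rewrite ratr_bs rmorph_nat.
lra.
Qed.
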